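(* In the setting of the context, for $c\in\mathbb{R}$ let $P(c)$ be the polygon with vertices $P_i(c)=M_i+cU_i$, $1\le i\le 2n$, and write $P_{i+1}(c)-P_i(c)=\lambda_{i+\frac12}(c)V_{i+\frac12}$. If all $\lambda_{i+\frac12}(c)\ge0$, then the $V$-length of $P(c)$ satisfies $$L_V(P(c))=\sum_{i=1}^{2n}\lambda_{i+\frac12}(c)=2c\,A(U),$$ where $A(U)=\frac12\sum_{i=1}^{2n}[U_i,U_{i+1}]$ is the area of $U$.
   Context: $[x,y]$ denotes the determinant of the matrix with columns $x,y\in\mathbb{R}^2$. Fix $n\ge2$; indices (integer and half-integer) are read modulo $2n$. $U$ is a convex $2n$-gon with distinct vertices $U_1,\dots,U_{2n}$ in counterclockwise order with $U_{i+n}=-U_i$, and $V_{i+\frac12}=(U_{i+1}-U_i)/[U_i,U_{i+1}]$. Let $a>0$ and let $P$ be a convex polygon with nonempty interior and vertex list $P_1,\dots,P_{2n}$ (consecutive entries may coincide) with $P_{i+1}-P_i$ a nonnegative multiple of $V_{i+\frac12}$ and $P_i-P_{i+n}=2aU_i$ for all $i$ (a polygon of constant $U$-width). Its central equidistant $M$ has vertices $M_i=\frac12(P_i+P_{i+n})$ (so $M_{i+n}=M_i$). The $V$-length of a polygon $Q_1,\dots,Q_{2n}$ with $Q_{i+1}-Q_i=\lambda_{i+\frac12}V_{i+\frac12}$, $\lambda_{i+\frac12}\ge0$, is $L_V(Q)=\sum_i\lambda_{i+\frac12}$. *)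

(* Defs.v *)
(* Polygon vertex lists are functions nat -> 'rV[R]_2, periodic of period 2n;
   the paper's index i (1..2n) is shifted to 0..2n-1, and the half-integer
   index i+1/2 is represented by the integer i. *)
From HB Require Import structures.
From mathcomp Require Import all_boot all_order all_algebra.
Set Implicit Arguments. Unset Strict Implicit. Unset Printing Implicit Defensive.
Import Order.TTheory GRing.Theory Num.Theory.
Local Open Scope ring_scope.

Section Defs.
Variable R : realFieldType.
Notation pt := 'rV[R]_2.

Definition det2 (x y : pt) : R := x 0 0 * y 0 1 - x 0 1 * y 0 0.

Definition Vdir (U : nat -> pt) (i : nat) : pt :=
  (det2 (U i) (U i.+1))^-1 *: (U i.+1 - U i).

(* U is a convex 2n-gon with distinct vertices U_0..U_{2n-1} in
   counterclockwise order (strict convex position: every other vertex lies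
   strictly to the left of each directed edge), indices mod 2n, and
   centrally symmetric: U_{i+n} = -U_i. *)
Definition sym_convex_polygon (n : nat) (U : nat -> pt) : Prop :=
  [/\ (forall i, U (i + 2 * n)%N = U i),
      (forall i, U (i + n)%N = - U i),
      (forall i j, (i < 2 * n)%N -> (j < 2 * n)%N -> i <> j -> U i <> U j)
    & (forall i j, (i < 2 * n)%N -> (j < 2 * n)%N -> j <> i ->
         j <> (i.+1 %% (2 * n))%N ->
         0 < det2 (U i.+1 - U i) (U j - U i))].

Definition const_width_polygon (n : nat) (U : nat -> pt) (a : R)
    (P : nat -> pt) : Prop :=
  [/\ (forall i, P (i + 2 * n)%N = P i),
      (* convexity: all vertices weakly to the left of every edge *)
      (forall i j, (i < 2 * n)%N -> (j < 2 * n)%N ->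
         0 <= det2 (P i.+1 - P i) (P j - P i)),
      (* nonempty interior: the vertices are not all collinear *)
      (exists i j k, [/\ (i < 2 * n)%N, (j < 2 * n)%N, (k < 2 * n)%N &
         det2 (P j - P i) (P k - P i) != 0]),
      (forall i, exists2 mu : R, 0 <= mu & P i.+1 - P i = mu *: Vdir U i)
    & (forall i, P i - P (i + n)%N = (2 * a) *: U i)].

Definition central_equidistant (n : nat) (P : nat -> pt) (i : nat) : pt :=
  2^-1 *: (P i + P (i + n)%N).

Definition Pc (n : nat) (U P : nat -> pt) (c : R) (i : nat) : pt :=
  central_equidistant n P i + c *: U i.

Definition areaU (n : nat) (U : nat -> pt) : R :=
  2^-1 * \sum_(i < 2 * n) det2 (U i) (U i.+1).

(* V-length of Q given its edge coefficients lam (Q_{i+1}-Q_i = lam_i V_{i+1/2}) *)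
Definition V_length (n : nat) (lam : nat -> R) : R := \sum_(i < 2 * n) lam i.

End Defs.

(* Main.v *)
Require Import Defs.
From HB Require Import structures.
From mathcomp Require Import all_boot all_order all_algebra.
From mathcomp Require Import zify ring lra.
Import Order.TTheory GRing.Theory Num.Theory.
Local Open Scope ring_scope.

Lemma det2_scaler (R : realFieldType) (x y : 'rV[R]_2) (k : R) :
  det2 x (k *: y) = k * det2 x y.
Proof. rewrite /det2 !mxE; ring. Qed.

Lemma sum_shift_n (R : realFieldType) (n : nat) (f : nat -> R) :
  (forall i, f (i + 2 * n)%N = f i) ->
  \sum_(i < 2 * n) f (i + n)%N = \sum_(i < 2 * n) f i.
Proof.
move=> Hp.
rewrite -(big_mkord xpredT (fun i => f (i + n)%N)) -(big_mkord xpredT f).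
have H2 : (2 * n = n + n)%N by lia.
rewrite H2 !(@big_cat_nat _ _ _ n 0 (n+n)) //=; try lia.
have E (F : nat -> R) : \sum_(n <= i < n + n) F i = \sum_(0 <= i < n) F (i + n)%N.
  by rewrite -{1}(add0n n) big_addn addnK.
rewrite !E [LHS]GRing.addrC; congr (_ + _).
apply: eq_bigr => i _. by rewrite -addnA -H2 Hp.
Qed.

Theorem proposition3p1 (R : realFieldType) (n : nat) (U : nat -> 'rV[R]_2)
    (a : R) (P : nat -> 'rV[R]_2) (c : R) (lam : nat -> R) :
  (2 <= n)%N ->
  sym_convex_polygon n U ->
  0 < a ->
  const_width_polygon n U a P ->
  (forall i, (i < 2 * n)%N -> Pc n U P c i.+1 - Pc n U P c i = lam i *: Vdir U i) ->
  (forall i, (i < 2 * n)%N -> 0 <= lam i) ->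
  V_length n lam = 2 * c * areaU n U.
Proof.
move=> n2 [Up Us _ Uc] _ [Pp _ _ _ _] Hlam _.
pose f j := det2 (U j) (P j.+1 - P j).
have fp : forall i, f (i + 2 * n)%N = f i.
  by move=> i; rewrite /f (Up i) -addSn (Pp i.+1) (Pp i).
have Dnz : forall i, (i < 2 * n)%N -> det2 (U i) (U i.+1) != 0.
  move=> i Hi.
  have [j [Hj Hji Hj1 HUj]] : exists j, [/\ (j < 2 * n)%N, j <> i,
       j <> (i.+1 %% (2 * n))%N & U j = - U i].
    case: (ltnP i n) => Hin.
      exists (i + n)%N; split => //; try lia.
      rewrite modn_small; lia.
    exists (i - n)%N; split; try lia.
      case: (ltnP i.+1 (2 * n)) => H1.
        rewrite modn_small //; lia.
      have -> : i.+1 = (2 * n)%N by lia.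
      rewrite modnn; lia.
    have := Us (i - n)%N. rewrite subnK // => ->. by rewrite opprK.
  have := Uc i j Hi Hj (nesym (nesym Hji)) Hj1.
  rewrite HUj /det2 !mxE => H.
  apply/eqP => H0; move: H; rewrite /det2 in H0.
  have -> : (U i.+1 0 0 - U i 0 0) * (- U i 0 1 - U i 0 1) -
      (U i.+1 0 1 - U i 0 1) * (- U i 0 0 - U i 0 0) =
      2 * (U i 0 0 * U i.+1 0 1 - U i 0 1 * U i.+1 0 0) by ring.
  by rewrite H0 mulr0 ltxx.
have key : forall i, (i < 2 * n)%N ->
    lam i = 2^-1 * (f i - f (i + n)%N) + c * det2 (U i) (U i.+1).
  move=> i Hi.
  have E : det2 (U i) (Pc n U P c i.+1 - Pc n U P c i) = lam i.
    rewrite Hlam // det2_scaler /Vdir det2_scaler.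
    have -> : det2 (U i) (U i.+1 - U i) = det2 (U i) (U i.+1).
      rewrite /det2 !mxE; ring.
    by rewrite mulVf ?mulr1 // Dnz.
  rewrite -E /f /Pc /central_equidistant -addSn Us.
  rewrite /det2 !mxE; ring.
rewrite /V_length /areaU (eq_bigr _ (fun (i : 'I_(2 * n)) _ => key i (ltn_ord i))).
rewrite big_split /= -mulr_sumr -mulr_sumr sumrB sum_shift_n // subrr mulr0 add0r.
have h2 : (2:R) != 0 by rewrite pnatr_eq0.
by field.
Qed.
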